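(* Let $n\ge 2$ and let $P(z)=\sum_{j=0}^{2n}p_jz^j$ be a polynomial with real coefficients, $p_{2n}\neq 0$, which is self-reciprocal, i.e. $p_j=p_{2n-j}$ for $j=0,\dots,2n$. Put $$C_n(x)=p_{2n}T_n(x)+p_{2n-1}T_{n-1}(x)+\cdots+p_{n+1}T_1(x)+\tfrac{p_n}{2}T_0(x),$$ so that $P(z)=2z^nC_n(x)$ with $x=\tfrac12\left(z+\tfrac1z\right)$. For each kind $\alpha\in\{T,U,V,W\}$, with $Q^{\alpha}_m$ denoting the Chebyshev polynomial of degree $m$ of that kind ($Q^T=T,\ Q^U=U,\ Q^V=V,\ Q^W=W$), define the class $\mathcal{P}_\alpha$ of such polynomials $P$ by: 1. $\mathcal{P}_T$: $p_{2n-2}=p_{2n-3}=\cdots=p_n=0$ and $p_{2n}p_{2n-1}\neq 0$; 2. $\mathcal{P}_U$: $p_j=p_{2n}$ for every even $j$ with $n\le j\le 2n$, $p_j=p_{2n-1}$ for every odd $j$ with $n\le j\le 2n$, and $p_{2n}p_{2n-1}\ne 0$; 3. $\mathcal{P}_V$: $p_{2n-k}=(-1)^{k-1}p_{2n-1}$ for $k=1,\dots,n$ (i.e. $p_{2n-1}=-p_{2n-2}=p_{2n-3}=\cdots=(-1)^np_{n+1}=(-1)^{n-1}p_n$), $p_{2n}\neq0$ and $p_{2n}\neq -p_{2n-1}$; 4. $\mathcal{P}_W$: $p_{2n-1}=p_{2n-2}=\cdots=p_n$, $p_{2n}\ne 0$ and $p_{2n}\neq p_{2n-1}$. Then for each $\alpha$,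 $P\in\mathcal{P}_\alpha$ if and only if $C_n(x)=c_0Q^\alpha_n(x)+c_1Q^\alpha_{n-1}(x)$ for some real $c_0,c_1$ with $c_0c_1\neq 0$ (i.e. $C_n$ is a Chebyshev quasi-orthogonal polynomial of order one of kind $\alpha$). Explicitly, for $P$ in the respective class: $C_n=p_{2n}T_n+p_{2n-1}T_{n-1}$; $C_n=\tfrac{p_{2n}}2U_n+\tfrac{p_{2n-1}}2U_{n-1}$; $C_n=\tfrac{p_{2n}}2V_n+\tfrac{p_{2n}+p_{2n-1}}2V_{n-1}$; $C_n=\tfrac{p_{2n}}2W_n+\tfrac{p_{2n-1}-p_{2n}}2W_{n-1}$.
   Context: Chebyshev polynomials of degree $m$ of the first, second, third and fourth kinds are defined, for $x=\cos\theta$, by $T_m(x)=\cos m\theta$, $U_m(x)=\frac{\sin(m+1)\theta}{\sin\theta}$, $V_m(x)=\frac{\cos(m+\frac12)\theta}{\cos\frac12\theta}$, $W_m(x)=\frac{\sin(m+\frac12)\theta}{\sin\frac12\theta}$. A polynomial of degree $n$ is called quasi-orthogonal of order one with respect to an orthogonal family $\{Q_m\}$ if it equals $c_0Q_n+c_1Q_{n-1}$ with $c_0c_1\neq0$. *)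

(* Defs.v *)
From HB Require Import structures.
From mathcomp Require Import all_boot all_order all_algebra.
From mathcomp Require Import reals.
Set Implicit Arguments. Unset Strict Implicit. Unset Printing Implicit Defensive.
Import Order.TTheory GRing.Theory Num.Theory.
Local Open Scope ring_scope.

Section Cheb.
Variable R : realType.

(* Chebyshev-type sequences: Q_0 = 1, Q_1 = a1, Q_(m+2) = 2 X Q_(m+1) - Q_m. *)
Fixpoint cheb_pair (a1 : {poly R}) (m : nat) : {poly R} * {poly R} :=
  match m with
  | 0 => (1, a1)
  | m'.+1 => let: (x, y) := cheb_pair a1 m' in (y, 'X *+ 2 * y - x)
  end.
Definition cheb_seq (a1 : {poly R}) (m : nat) : {poly R} := (cheb_pair a1 m).1.

Definition chebT (m : nat) : {poly R} := cheb_seq 'X m.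
Definition chebU (m : nat) : {poly R} := cheb_seq ('X *+ 2) m.
(* Third kind: V_0 = 1, V_1 = 2x - 1. (V_m(cos t) = cos((m+1/2)t)/cos(t/2)) *)
Definition chebV (m : nat) : {poly R} := cheb_seq ('X *+ 2 - 1) m.
(* Fourth kind: W_0 = 1, W_1 = 2x + 1. (W_m(cos t) = sin((m+1/2)t)/sin(t/2)) *)
Definition chebW (m : nat) : {poly R} := cheb_seq ('X *+ 2 + 1) m.

Definition self_reciprocal_deg (n : nat) (p : {poly R}) : Prop :=
  size p = (2 * n).+1 /\ forall j, (j <= 2 * n)%N -> p`_j = p`_(2 * n - j).

Definition Cn (n : nat) (p : {poly R}) : {poly R} :=
  \sum_(1 <= k < n.+1) p`_(n + k) *: chebT k + (p`_n / 2) *: chebT 0.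

Definition classT (n : nat) (p : {poly R}) : Prop :=
  (forall j, (n <= j)%N -> (j <= 2 * n - 2)%N -> p`_j = 0) /\
  p`_(2 * n) * p`_(2 * n - 1) != 0.

Definition classU (n : nat) (p : {poly R}) : Prop :=
  (forall j, (n <= j)%N -> (j <= 2 * n)%N ->
     (~~ odd j -> p`_j = p`_(2 * n)) /\ (odd j -> p`_j = p`_(2 * n - 1))) /\
  p`_(2 * n) * p`_(2 * n - 1) != 0.

Definition classV (n : nat) (p : {poly R}) : Prop :=
  (forall k, (1 <= k)%N -> (k <= n)%N ->
     p`_(2 * n - k) = (-1) ^+ (k - 1) * p`_(2 * n - 1)) /\
  p`_(2 * n) != 0 /\ p`_(2 * n) != - p`_(2 * n - 1).

Definition classW (n : nat) (p : {poly R}) : Prop :=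
  (forall j, (n <= j)%N -> (j <= 2 * n - 1)%N -> p`_j = p`_(2 * n - 1)) /\
  p`_(2 * n) != 0 /\ p`_(2 * n) != p`_(2 * n - 1).

Definition quasi_orth1 (Q : nat -> {poly R}) (n : nat) (f : {poly R}) : Prop :=
  exists c0 c1 : R, c0 * c1 != 0 /\ f = c0 *: Q n + c1 *: Q n.-1.

End Cheb.

(* Main.v *)
Require Import Defs.
From HB Require Import structures.
From mathcomp Require Import all_boot all_order all_algebra.
From mathcomp Require Import reals.
From mathcomp Require Import ring lra zify.
Import Order.TTheory GRing.Theory Num.Theory.
Local Open Scope ring_scope.

Lemma cheb0 (R : realType) (a : {poly R}) : cheb_seq a 0 = 1.
Proof. by []. Qed.
Lemma cheb1 (R : realType) (a : {poly R}) : cheb_seq a 1 = a.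
Proof. by []. Qed.
Lemma chebrec (R : realType) (a : {poly R}) m :
  cheb_seq a m.+2 = 'X *+ 2 * cheb_seq a m.+1 - cheb_seq a m.
Proof.
rewrite /cheb_seq /=.
by case: (cheb_pair a m) => x y /=.
Qed.

Lemma rec_uniq (R : realType) (f g : nat -> {poly R}) :
  (forall m, f m.+2 = 'X *+ 2 * f m.+1 - f m) ->
  (forall m, g m.+2 = 'X *+ 2 * g m.+1 - g m) ->
  f 0%N = g 0%N -> f 1%N = g 1%N -> forall m, f m = g m.
Proof.
move=> Hf Hg H0 H1 m.
suff: f m = g m /\ f m.+1 = g m.+1 by case.
elim: m => [|m [IH1 IH2]]; first by split.
by split => //; rewrite Hf Hg IH1 IH2.
Qed.

Lemma diffW (R : realType) m : chebW R m.+1 = chebW _ m + chebT _ m.+1 *+ 2.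
Proof.
apply: (@rec_uniq R (fun m => chebW R m.+1) (fun m => chebW _ m + chebT _ m.+1 *+ 2)) => [k|k||].
- by rewrite /chebW chebrec.
- rewrite /chebW /chebT !chebrec; ring.
- by rewrite /= /chebW /chebT !cheb1 !cheb0; ring.
- by rewrite /= /chebW /chebT !chebrec !cheb1 !cheb0; ring.
Qed.

Lemma diffV (R : realType) m : chebV R m.+1 = - chebV _ m + chebT _ m.+1 *+ 2.
Proof.
apply: (@rec_uniq R (fun m => chebV R m.+1) (fun m => - chebV _ m + chebT _ m.+1 *+ 2)) => [k|k||].
- by rewrite /chebV chebrec.
- rewrite /chebV /chebT !chebrec; ring.
- by rewrite /= /chebV /chebT !cheb1 !cheb0; ring.
- by rewrite /= /chebV /chebT !chebrec !cheb1 !cheb0; ring.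
Qed.

Lemma diffU (R : realType) m : chebU R m.+2 = chebU _ m + chebT _ m.+2 *+ 2.
Proof.
apply: (@rec_uniq R (fun m => chebU R m.+2) (fun m => chebU _ m + chebT _ m.+2 *+ 2)) => [k|k||].
- by rewrite /chebU chebrec.
- rewrite /chebU /chebT !chebrec; ring.
- by rewrite /= /chebU /chebT !chebrec !cheb1 !cheb0; ring.
- by rewrite /= /chebU /chebT !chebrec !cheb1 !cheb0; ring.
Qed.

Lemma coefT (R : realType) m :
  (forall j, (m < j)%N -> (chebT R m)`_j = 0) /\ 0 < (chebT R m)`_m.
Proof.
suff: ((forall j, (m < j)%N -> (chebT R m)`_j = 0) /\ 0 < (chebT R m)`_m) /\
      ((forall j, (m.+1 < j)%N -> (chebT R m.+1)`_j = 0) /\ 0 < (chebT R m.+1)`_m.+1) by case.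
elim: m => [|m [[IH1 IH2] [IH3 IH4]]].
  rewrite /chebT cheb0 cheb1; split; split.
  - by move=> j hj; rewrite coef1; case: j hj.
  - by rewrite coef1.
  - by move=> j hj; rewrite coefX; case: j hj => [|[|j]].
  - by rewrite coefX.
split; first by split.
have E : chebT _ m.+2 = ('X * chebT _ m.+1) *+ 2 - chebT _ m :> {poly R}.
  by rewrite /chebT chebrec mulrnAl.
rewrite E; split.
- move=> j hj; rewrite coefB coefMn coefXM.
  case: j hj => [//|j] hj /=.
  by rewrite IH3 // IH1 ?mul0rn ?subr0 //; lia.
- rewrite coefB coefMn coefXM /= IH1 // subr0.
  by rewrite pmulrn_lgt0.
Qed.
Definition ee (R : realType) (k : nat) : R := if k == 0%N then 1 else 2.

Lemma ee_neq0 (R : realType) k : ee R k / 2 != 0.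
Proof. by rewrite /ee; case: (k == 0%N); rewrite mulf_neq0 ?invr_eq0 ?pnatr_eq0 ?oner_neq0. Qed.

Lemma Tinj (R : realType) N (a : nat -> R) :
  \sum_(0 <= k < N) a k *: chebT R k = 0 -> forall k, (k < N)%N -> a k = 0.
Proof.
elim: N => [|N IH] H k hk //.
rewrite big_nat_recr //= in H.
have HN : a N = 0.
  have := congr1 (fun q : {poly R} => q`_N) H.
  rewrite /= coefD coefZ coef_sum coef0 big1_seq ?add0r.
    by move/eqP; rewrite mulf_eq0 (gt_eqF (proj2 (coefT R N))) orbF => /eqP.
  move=> i; rewrite mem_index_iota => /andP[_ hi].
  by rewrite coefZ (proj1 (coefT R i)) ?mulr0.
rewrite HN scale0r addr0 in H.
move: hk; rewrite ltnS leq_eqVlt => /orP[/eqP->//|hk].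
exact: IH.
Qed.

Lemma expT (R : realType) m :
  chebT R m = \sum_(0 <= k < m.+1) (if k == m then 1 else 0) *: chebT R k.
Proof.
rewrite big_nat_recr //= eqxx scale1r big1_seq ?add0r // => i.
by rewrite mem_index_iota => /andP[_ hi]; rewrite (ltn_eqF hi) scale0r.
Qed.

Lemma expW (R : realType) m :
  chebW R m = \sum_(0 <= k < m.+1) ee R k *: chebT R k.
Proof.
elim: m => [|m IH].
  by rewrite big_nat1 /ee /= scale1r /chebW /chebT !cheb0.
by rewrite big_nat_recr //= -IH diffW /ee /= scaler_nat.
Qed.

Lemma expV (R : realType) m :
  chebV R m = \sum_(0 <= k < m.+1) ((-1) ^+ (m - k) * ee R k) *: chebT R k.
Proof.
elim: m => [|m IH].
  by rewrite big_nat1 /ee /= mul1r scale1r /chebV /chebT !cheb0.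
rewrite big_nat_recr //= diffV IH subnn expr0 mul1r /ee /= scaler_nat.
congr (_ + _); rewrite -sumrN; apply: eq_big_nat => i /andP[_ hi].
by rewrite subSn // exprS mulN1r mulNr scaleNr.
Qed.

Lemma expU (R : realType) m :
  chebU R m = \sum_(0 <= k < m.+1) (if odd (m - k) then 0 else ee R k) *: chebT R k.
Proof.
suff: chebU R m = \sum_(0 <= k < m.+1) (if odd (m - k) then 0 else ee R k) *: chebT R k /\
      chebU R m.+1 = \sum_(0 <= k < m.+2) (if odd (m.+1 - k) then 0 else ee R k) *: chebT R k.
  by case.
elim: m => [|m [IH1 IH2]].
  rewrite !big_nat_recr //= !big_nil !add0r /ee /= !scale1r /chebU /chebT !cheb0 !cheb1.
  by rewrite scale0r add0r scaler_nat.
split => //.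
rewrite big_nat_recr //= big_nat_recr //= diffU IH1 subnn /= subSn // subnn /=.
rewrite scale0r addr0 /ee /= scaler_nat; congr (_ + _).
apply: eq_big_nat => i /andP[_ hi].
by rewrite !subSn ?(ltnW hi) //= negbK.
Qed.

Lemma CnE (R : realType) n (p : {poly R}) :
  Cn n p = \sum_(0 <= k < n.+1) (ee R k / 2 * p`_(n + k)) *: chebT R k.
Proof.
rewrite /Cn [RHS]big_ltn //= [RHS]addrC addn0 /ee /= mul1r; f_equal.
apply: eq_big_nat => i /andP[hi _].
by rewrite (gtn_eqF hi) divff ?mul1r // pnatr_eq0.
by rewrite mulrC.
Qed.

Lemma key (R : realType) n (p : {poly R}) (G : nat -> R) :
  Cn n p = \sum_(0 <= k < n.+1) (ee R k / 2 * G k) *: chebT R k <->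
  (forall k, (k <= n)%N -> p`_(n + k) = G k).
Proof.
rewrite CnE; split.
  move=> H k hk; apply/eqP; rewrite -subr_eq0.
  have HS : \sum_(0 <= k < n.+1)
      (ee R k / 2 * p`_(n + k) - ee R k / 2 * G k) *: chebT R k = 0.
    under eq_bigr do rewrite scalerBl.
    by rewrite sumrB H subrr.
  have /eqP := @Tinj R n.+1 _ HS k hk.
  by rewrite -mulrBr mulf_eq0 (negbTE (ee_neq0 R k)).
move=> H; apply: eq_big_nat => i /andP[_ hi].
by rewrite H.
Qed.

Lemma comb (R : realType) (Q : nat -> {poly R}) (c : nat -> nat -> R) n (c0 c1 : R) :
  (0 < n)%N ->
  (forall m, Q m = \sum_(0 <= k < m.+1) c m k *: chebT R k) ->
  c0 *: Q n + c1 *: Q n.-1 =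
  \sum_(0 <= k < n.+1) (c0 * c n k + c1 * (if (k < n)%N then c n.-1 k else 0)) *: chebT R k.
Proof.
case: n => // n _ HQ /=; rewrite !HQ.
under [RHS]eq_bigr do rewrite scalerDl.
rewrite big_split /= !scaler_sumr; congr (_ + _).
  by apply: eq_bigr => i _; rewrite scalerA.
rewrite [RHS]big_nat_recr //= ltnn mulr0 scale0r addr0.
apply: eq_big_nat => i /andP[_ hi].
by rewrite hi scalerA.
Qed.

Lemma ee2 (R : realType) k : ee R k / 2 * 2 = ee R k.
Proof. by rewrite divfK // pnatr_eq0. Qed.

Lemma eeS (R : realType) k : (0 < k)%N -> ee R k / 2 = 1.
Proof. by move=> hk; rewrite /ee (gtn_eqF hk) divff // pnatr_eq0. Qed.

Definition GT {R : realType} (n : nat) (c0 c1 : R) (k : nat) : R :=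
  if k == n then c0 else if k == n.-1 then c1 else 0.
Definition GU {R : realType} (n : nat) (c0 c1 : R) (k : nat) : R :=
  2 * (if odd (n - k) then c1 else c0).
Definition GV {R : realType} (n : nat) (c0 c1 : R) (k : nat) : R :=
  2 * (if k == n then c0 else (-1) ^+ (n - k) * (c0 - c1)).
Definition GW {R : realType} (n : nat) (c0 c1 : R) (k : nat) : R :=
  2 * (if k == n then c0 else c0 + c1).

Lemma combT (R : realType) n (c0 c1 : R) : (2 <= n)%N ->
  c0 *: chebT R n + c1 *: chebT R n.-1 =
  \sum_(0 <= k < n.+1) (ee R k / 2 * GT n c0 c1 k) *: chebT R k.
Proof.
move=> n2; rewrite (@comb R _ _ n c0 c1 _ (@expT R)); last by lia.
apply: eq_big_nat => k /andP[_ hk]; congr (_ *: _); rewrite /GT.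
case: (eqVneq k n) => [->|kn].
  rewrite ltnn eeS; last by lia.
  by rewrite mulr1 mulr0 addr0 mul1r.
case: (eqVneq k n.-1) => [->|kn1].
  rewrite eeS; last by lia.
  have -> : (n.-1 < n)%N by lia.
  by rewrite mulr0 mulr1 add0r mul1r.
by rewrite mulr0 mulr0; case: (k < n)%N; rewrite ?mulr0 addr0.
Qed.

Lemma combU (R : realType) n (c0 c1 : R) : (1 <= n)%N ->
  c0 *: chebU R n + c1 *: chebU R n.-1 =
  \sum_(0 <= k < n.+1) (ee R k / 2 * GU n c0 c1 k) *: chebT R k.
Proof.
move=> n1; rewrite (@comb R _ _ n c0 c1 _ (@expU R)) //.
apply: eq_big_nat => k /andP[_ hk]; congr (_ *: _); rewrite /GU mulrA ee2.
case: (eqVneq k n) => [->|kn].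
  by rewrite ltnn subnn /= mulr0 addr0 mulrC.
have -> : (k < n)%N by lia.
have -> : (n - k = (n.-1 - k).+1)%N by lia.
by rewrite /=; case: (odd (n.-1 - k)) => /=; ring.
Qed.

Lemma combV (R : realType) n (c0 c1 : R) : (1 <= n)%N ->
  c0 *: chebV R n + c1 *: chebV R n.-1 =
  \sum_(0 <= k < n.+1) (ee R k / 2 * GV n c0 c1 k) *: chebT R k.
Proof.
move=> n1; rewrite (@comb R _ _ n c0 c1 _ (@expV R)) //.
apply: eq_big_nat => k /andP[_ hk]; congr (_ *: _); rewrite /GV mulrA ee2.
case: (eqVneq k n) => [->|kn].
  by rewrite ltnn subnn expr0 mulr0 addr0 mul1r mulrC.
have -> : (k < n)%N by lia.
have -> : (n - k = (n.-1 - k).+1)%N by lia.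
rewrite exprS; ring.
Qed.

Lemma combW (R : realType) n (c0 c1 : R) : (1 <= n)%N ->
  c0 *: chebW R n + c1 *: chebW R n.-1 =
  \sum_(0 <= k < n.+1) (ee R k / 2 * GW n c0 c1 k) *: chebT R k.
Proof.
move=> n1; rewrite (@comb R _ (fun _ k => ee R k) n c0 c1 _ (@expW R)) //.
apply: eq_big_nat => k /andP[_ hk]; congr (_ *: _); rewrite /GW mulrA ee2.
case: (eqVneq k n) => [->|kn].
  by rewrite ltnn mulr0 addr0 mulrC.
have -> : (k < n)%N by lia.
ring.
Qed.

Lemma oddsub n k : (k <= n)%N -> odd (n - k) = odd (n + k)%N.
Proof.
move=> hk; have -> : (n + k = (n - k) + 2 * k)%N by lia.
by rewrite oddD oddM /= addbF.
Qed.

Lemma two_neq0 (R : realType) : (2 : R) != 0.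
Proof. by rewrite pnatr_eq0. Qed.

Lemma qK (R : realType) (Q : nat -> {poly R}) (G : R -> R -> nat -> R) n (p : {poly R}) :
  (forall c0 c1, c0 *: Q n + c1 *: Q n.-1 =
     \sum_(0 <= k < n.+1) (ee R k / 2 * G c0 c1 k) *: chebT R k) ->
  quasi_orth1 Q n (Cn n p) <->
  exists c0 c1, c0 * c1 != 0 /\ forall k, (k <= n)%N -> p`_(n + k) = G c0 c1 k.
Proof.
move=> HC; split.
  move=> [c0 [c1 [nz E]]]; exists c0, c1; split => //.
  by apply/key; rewrite E HC.
move=> [c0 [c1 [nz E]]]; exists c0, c1; split => //.
by rewrite HC; apply/key.
Qed.

Lemma clT_fwd (R : realType) n (p : {poly R}) : (2 <= n)%N -> classT n p ->
  forall k, (k <= n)%N -> p`_(n + k) = GT n p`_(2 * n) p`_(2 * n - 1) k.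
Proof.
move=> n2 [H _] k hk; rewrite /GT.
case: (eqVneq k n) => [->|kn].
  by have -> : (n + n = 2 * n)%N by lia.
case: (eqVneq k n.-1) => [->|kn1].
  by have -> : (n + n.-1 = 2 * n - 1)%N by lia.
by apply: H; lia.
Qed.

Lemma clT_bwd (R : realType) n (p : {poly R}) : (2 <= n)%N ->
  (exists c0 c1, c0 * c1 != 0 /\ forall k, (k <= n)%N -> p`_(n + k) = GT n c0 c1 k) ->
  classT n p.
Proof.
move=> n2 [c0 [c1 [nz H]]].
have h0 := H n (leqnn n); rewrite /GT eqxx in h0.
have h1 := H n.-1 (leq_pred n); rewrite /GT in h1.
rewrite (_ : (n.-1 == n) = false) ?eqxx in h1; last by apply/eqP; lia.
split.
  move=> j hj1 hj2; have := H (j - n)%N ltac:(lia); rewrite /GT subnKC //.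
  rewrite (_ : ((j - n)%N == n) = false); last by apply/eqP; lia.
  by rewrite (_ : ((j - n)%N == n.-1) = false) //; apply/eqP; lia.
have e0 : (2 * n = n + n)%N by lia.
have e1 : (2 * n - 1 = n + n.-1)%N by lia.
by rewrite e1 e0 h0 h1.
Qed.

Lemma clU_fwd (R : realType) n (p : {poly R}) : (2 <= n)%N -> classU n p ->
  forall k, (k <= n)%N -> p`_(n + k) = GU n (p`_(2 * n) / 2) (p`_(2 * n - 1) / 2) k.
Proof.
move=> n2 [H _] k hk; rewrite /GU oddsub //.
have [Ha Hb] := H (n + k) ltac:(lia) ltac:(lia).
case: (boolP (odd (n + k)%N)) => ho.
  by rewrite Hb // mulrC divfK ?two_neq0.
by rewrite Ha // mulrC divfK ?two_neq0.
Qed.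

Lemma clU_bwd (R : realType) n (p : {poly R}) : (2 <= n)%N ->
  (exists c0 c1, c0 * c1 != 0 /\ forall k, (k <= n)%N -> p`_(n + k) = GU n c0 c1 k) ->
  classU n p.
Proof.
move=> n2 [c0 [c1 [nz H]]].
have h0 := H n (leqnn n); rewrite /GU subnn /= in h0.
have h1 := H n.-1 (leq_pred n); rewrite /GU in h1.
rewrite (_ : (n - n.-1 = 1)%N) /= in h1; last by lia.
have e0 : (2 * n = n + n)%N by lia.
have e1 : (2 * n - 1 = n + n.-1)%N by lia.
split.
  move=> j hj1 hj2; have := H (j - n)%N ltac:(lia); rewrite /GU subnKC // oddsub; last by lia.
  rewrite subnKC //.
  by move=> ->; split => hj; rewrite ?e1 ?e0 ?h0 ?h1 ?(negbTE hj) ?hj.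
rewrite e1 e0 h0 h1 mulrACA mulf_neq0 //.
by rewrite mulf_neq0 ?two_neq0.
Qed.

Lemma clV_fwd (R : realType) n (p : {poly R}) : (2 <= n)%N -> classV n p ->
  forall k, (k <= n)%N ->
  p`_(n + k) = GV n (p`_(2 * n) / 2) ((p`_(2 * n) + p`_(2 * n - 1)) / 2) k.
Proof.
move=> n2 [H _] k hk; rewrite /GV.
case: (eqVneq k n) => [->|kn].
  have -> : (n + n = 2 * n)%N by lia.
  by rewrite mulrC divfK ?two_neq0.
have := H (n - k)%N ltac:(lia) ltac:(lia).
have -> : (2 * n - (n - k) = n + k)%N by lia.
move=> ->.
case E: (n - k)%N => [|m]; first lia.
rewrite subn1 /= exprS.
by field.
Qed.

Lemma clV_bwd (R : realType) n (p : {poly R}) : (2 <= n)%N ->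
  (exists c0 c1, c0 * c1 != 0 /\ forall k, (k <= n)%N -> p`_(n + k) = GV n c0 c1 k) ->
  classV n p.
Proof.
move=> n2 [c0 [c1 [nz H]]].
have h0 := H n (leqnn n); rewrite /GV eqxx in h0.
have h1 := H n.-1 (leq_pred n); rewrite /GV in h1.
rewrite (_ : (n.-1 == n) = false) in h1; last by apply/eqP; lia.
rewrite (_ : (n - n.-1 = 1)%N) in h1; last by lia.
rewrite expr1 in h1.
have e0 : (2 * n = n + n)%N by lia.
have e1 : (2 * n - 1 = n + n.-1)%N by lia.
have c0n : c0 != 0 by apply: contraNneq nz => ->; rewrite mul0r.
have c1n : c1 != 0 by apply: contraNneq nz => ->; rewrite mulr0.
split; last split.
- move=> k hk1 hk2; have := H (n - k)%N ltac:(lia); rewrite /GV.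
  rewrite (_ : ((n - k)%N == n) = false); last by apply/eqP; lia.
  have -> : (n + (n - k) = 2 * n - k)%N by lia.
  move=> ->; rewrite e1 h1.
  have -> : (n - (n - k) = (k - 1).+1)%N by lia.
  rewrite exprS; ring.
- by rewrite e0 h0 mulf_neq0 ?two_neq0.
- rewrite e1 e0 h0 h1; apply/eqP => E.
  have : c1 = 0 by lra.
  by move/eqP; rewrite (negbTE c1n).
Qed.

Lemma clW_fwd (R : realType) n (p : {poly R}) : (2 <= n)%N -> classW n p ->
  forall k, (k <= n)%N ->
  p`_(n + k) = GW n (p`_(2 * n) / 2) ((p`_(2 * n - 1) - p`_(2 * n)) / 2) k.
Proof.
move=> n2 [H _] k hk; rewrite /GW.
case: (eqVneq k n) => [->|kn].
  have -> : (n + n = 2 * n)%N by lia.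
  by rewrite mulrC divfK ?two_neq0.
rewrite H; [by field | lia | lia].
Qed.

Lemma clW_bwd (R : realType) n (p : {poly R}) : (2 <= n)%N ->
  (exists c0 c1, c0 * c1 != 0 /\ forall k, (k <= n)%N -> p`_(n + k) = GW n c0 c1 k) ->
  classW n p.
Proof.
move=> n2 [c0 [c1 [nz H]]].
have h0 := H n (leqnn n); rewrite /GW eqxx in h0.
have h1 := H n.-1 (leq_pred n); rewrite /GW in h1.
rewrite (_ : (n.-1 == n) = false) in h1; last by apply/eqP; lia.
have e0 : (2 * n = n + n)%N by lia.
have e1 : (2 * n - 1 = n + n.-1)%N by lia.
have c0n : c0 != 0 by apply: contraNneq nz => ->; rewrite mul0r.
have c1n : c1 != 0 by apply: contraNneq nz => ->; rewrite mulr0.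
split; last split.
- move=> j hj1 hj2; have := H (j - n)%N ltac:(lia); rewrite /GW subnKC //.
  rewrite (_ : ((j - n)%N == n) = false); last by apply/eqP; lia.
  by move=> ->; rewrite e1 h1.
- by rewrite e0 h0 mulf_neq0 ?two_neq0.
- rewrite e1 e0 h0 h1; apply/eqP => E.
  have : c1 = 0 by lra.
  by move/eqP; rewrite (negbTE c1n).
Qed.

Lemma half_nz (R : realType) (x y : R) : x != 0 -> y != 0 -> (x / 2) * (y / 2) != 0.
Proof. by move=> hx hy; rewrite !mulf_neq0 // invr_eq0 two_neq0. Qed.

Theorem mainTheorem1 (R : realType) (n : nat) (p : {poly R}) :
  (2 <= n)%N -> self_reciprocal_deg n p ->
  (classT n p <-> quasi_orth1 (@chebT R) n (Cn n p)) /\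
  (classU n p <-> quasi_orth1 (@chebU R) n (Cn n p)) /\
  (classV n p <-> quasi_orth1 (@chebV R) n (Cn n p)) /\
  (classW n p <-> quasi_orth1 (@chebW R) n (Cn n p)) /\
  (classT n p -> Cn n p = p`_(2 * n) *: @chebT R n + p`_(2 * n - 1) *: @chebT R n.-1) /\
  (classU n p -> Cn n p = (p`_(2 * n) / 2) *: @chebU R n
                          + (p`_(2 * n - 1) / 2) *: @chebU R n.-1) /\
  (classV n p -> Cn n p = (p`_(2 * n) / 2) *: @chebV R n
                          + ((p`_(2 * n) + p`_(2 * n - 1)) / 2) *: @chebV R n.-1) /\
  (classW n p -> Cn n p = (p`_(2 * n) / 2) *: @chebW R n
                          + ((p`_(2 * n - 1) - p`_(2 * n)) / 2) *: @chebW R n.-1).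
Proof.
move=> n2 _.
have n1 : (1 <= n)%N by lia.
have qT := @qK R (chebT R) (@GT R n) n p (fun c0 c1 => combT R n c0 c1 n2).
have qU := @qK R (chebU R) (@GU R n) n p (fun c0 c1 => combU R n c0 c1 n1).
have qV := @qK R (chebV R) (@GV R n) n p (fun c0 c1 => combV R n c0 c1 n1).
have qW := @qK R (chebW R) (@GW R n) n p (fun c0 c1 => combW R n c0 c1 n1).
split; [|split; [|split; [|split; [|split; [|split; [|split]]]]]].
- rewrite qT; split; last exact: clT_bwd.
  move=> h; exists p`_(2 * n), p`_(2 * n - 1); split; first exact: h.2.
  exact: clT_fwd.
- rewrite qU; split; last exact: clU_bwd.
  move=> h; exists (p`_(2 * n) / 2), (p`_(2 * n - 1) / 2); split; last exact: clU_fwd.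
  have := h.2; rewrite mulf_eq0 negb_or => /andP[a b].
  exact: half_nz.
- rewrite qV; split; last exact: clV_bwd.
  move=> h; exists (p`_(2 * n) / 2), ((p`_(2 * n) + p`_(2 * n - 1)) / 2); split; last exact: clV_fwd.
  case: h => _ [a b]; apply: half_nz => //.
  by rewrite addr_eq0.
- rewrite qW; split; last exact: clW_bwd.
  move=> h; exists (p`_(2 * n) / 2), ((p`_(2 * n - 1) - p`_(2 * n)) / 2); split; last exact: clW_fwd.
  case: h => _ [a b]; apply: half_nz => //.
  by rewrite subr_eq0 eq_sym.
- by move=> h; rewrite combT //; apply/key; exact: clT_fwd.
- by move=> h; rewrite combU //; apply/key; exact: clU_fwd.
- by move=> h; rewrite combV //; apply/key; exact: clV_fwd.
- by move=> h; rewrite combW //; apply/key; exact: clW_fwd.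
Qed.
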